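(* Fix $T>0$ and $\lambda>0$. A single indivisible item is offered over the horizon $[0,T]$. The number of buyers is Poisson with mean $\lambda T$; conditional on this number, buyers' arrival times $\alpha_i$ are i.i.d. uniform on $[0,T]$ and their valuations $v_i$ are i.i.d. uniform on $[0,1]$, independent of the arrivals. Let $w:[0,1]\to[0,T]\cup\{\infty\}$ be a regular threshold time function and suppose every buyer $i$ uses the value-based threshold strategy $\sigma_w$, i.e. chooses target purchase time $\tau_i=\max\{w(v_i),\alpha_i\}$. Let $\tau^*=\min_i \tau_i$ be the sale time (with $\tau^*=\infty$ if there are no buyers or all $\tau_i=\infty$). Then $$\Pr(\tau^*>t)=e^{-\lambda t\,(1-w^{-1}(t))}\qquad\text{for all } t\in[0,T],$$ where $w^{-1}(t):=\inf\{v\in[0,1]: w(v)\le t\}$ (with $\inf\emptyset=1$).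
   Context: A threshold time function is a map $w:[0,1]\to[0,T]\cup\{\infty\}$. Define $\underline v_w=\inf\{v: w(v)<\infty\}$ and $\overline v_w=\sup\{v: w(v)>0\}$. The function $w$ is called regular if: (i) $w$ is non-increasing on $[0,1]$; (ii) $w$ is strictly decreasing on $[\underline v_w,\overline v_w]\cap[0,1]$; (iii) $w$ is continuous on $(\underline v_w,\overline v_w]\cap[0,1]$; (iv) $w$ is right-differentiable on $[\underline v_w,\overline v_w)\cap[0,1]$. The value-based threshold (VBT) strategy induced by $w$ is $\sigma_w(v,\alpha)=\max\{w(v),\alpha\}$ for $v\in[0,1]$, $\alpha\in[0,T]$ (with $\max\{\infty,\alpha\}=\infty$). *)

(* Defs.v *)
From HB Require Import structures.
From mathcomp Require Import all_boot all_order all_algebra.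
From mathcomp Require Import all_classical all_reals all_analysis.

Set Implicit Arguments.
Unset Strict Implicit.
Unset Printing Implicit Defensive.

Import Order.TTheory GRing.Theory Num.Theory.
Import numFieldNormedType.Exports.

Local Open Scope classical_set_scope.
Local Open Scope ring_scope.

Section defs.
Context {R : realType}.
Local Open Scope ereal_scope.

(* A threshold time function w : [0,1] -> [0,T] \cup {oo}; oo is +oo.
   Only the values of w on [0,1] matter. *)
Definition threshold_time_fun (T : R) (w : R -> \bar R) : Prop :=
  forall v : R, (0 <= v <= 1)%R -> w v = +oo \/ (0 <= w v /\ w v <= T%:E).

Definition vlow (w : R -> \bar R) : \bar R :=
  ereal_inf [set v%:E | v in [set v : R | (0 <= v <= 1)%R /\ w v < +oo]].

Definition vhigh (w : R -> \bar R) : \bar R :=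
  ereal_sup [set v%:E | v in [set v : R | (0 <= v <= 1)%R /\ 0 < w v]].

Definition regular (w : R -> \bar R) : Prop :=
  (forall u v : R, (0 <= u)%R -> (u <= v)%R -> (v <= 1)%R -> w v <= w u) /\
  (forall u v : R, (0 <= u)%R -> (v <= 1)%R -> vlow w <= u%:E ->
       v%:E <= vhigh w -> (u < v)%R -> w v < w u) /\
  (forall v : R, (0 <= v <= 1)%R -> vlow w < v%:E -> v%:E <= vhigh w ->
       w @ (within `[0%R, 1%R] (nbhs v)) --> w v) /\
  (forall v : R, (0 <= v <= 1)%R -> vlow w <= v%:E -> v%:E < vhigh w ->
       w v \is a fin_num /\
       (\forall h \near (0%R)^'+, w (v + h)%R \is a fin_num) /\
       exists l : R,
         (fun h : R => (fine (w (v + h)%R) - fine (w v)) / h)%R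
           @ (0%R)^'+ --> l).

Definition winv (w : R -> \bar R) (t : R) : R :=
  if `[< exists v : R, (0 <= v <= 1)%R /\ w v <= t%:E >]
  then inf [set v : R | (0 <= v <= 1)%R /\ w v <= t%:E]
  else 1%R.

Definition vbt (w : R -> \bar R) (v alpha : R) : \bar R :=
  maxe (w v) alpha%:E.

Definition sale_time (n : nat) (tau : nat -> \bar R) : \bar R :=
  \big[mine/+oo]_(i < n) tau i.

End defs.

(* Main.v *)
Require Import Defs.
From HB Require Import structures.
From mathcomp Require Import all_boot all_order all_algebra.
From mathcomp Require Import all_classical all_reals all_analysis.
From mathcomp Require Import ring lra.

Import Order.TTheory GRing.Theory Num.Theory.
Import numFieldNormedType.Exports.

Local Open Scope classical_set_scope.
Local Open Scope ring_scope.

Lemma unif_eq (R : realType) (a b : R) (ab : a < b) (U : set R) : measurable U ->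
  uniform_prob ab U = (((b - a)^-1)%:E * lebesgue_measure (U `&` `[a, b]))%E.
Proof.
move=> mU; rewrite /uniform_prob integral_uniform_pdf.
rewrite (eq_integral (fun=> ((b - a)^-1)%:E)); last first.
  by move=> x; rewrite inE => -[_]; rewrite /= in_itv /uniform_pdf /= => ->.
by rewrite integral_cst //; exact: measurableI.
Qed.

Lemma unif_le (R : realType) (T t : R) (hT : 0 < T) : 0 <= t <= T ->
  uniform_prob hT `]-oo, t]%classic = (t / T)%:E.
Proof.
move=> /andP[t0 tT]; rewrite unif_eq //.
have -> : `]-oo, t]%classic `&` `[0, T]%classic = `[0, t]%classic :> set R.
  apply/seteqP; split => x /=; rewrite !in_itv /=.
    by move=> [-> /andP[-> _]].
  move=> /andP[x0 xt]; split => //; rewrite x0 /=; exact: le_trans xt tT.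
rewrite lebesgue_measure_itv /= lte_fin subr0 oppr0 adde0.
case: (ltrP 0 t) => [_|t0']; first by rewrite -EFinM mulrC.
have -> : t = 0 by apply/eqP; rewrite eq_le t0' t0.
by rewrite mul0r mule0.
Qed.

Lemma S_shape (R : realType) (w : R -> \bar R) (t : R)
  (mono : forall u v : R, 0 <= u -> u <= v -> v <= 1 -> (w v <= w u)%E) :
  0 <= winv w t <= 1 /\
  ([set x : R | (0 <= x <= 1) /\ (w x <= t%:E)%E] = `[winv w t, 1]%classic \/
   [set x : R | (0 <= x <= 1) /\ (w x <= t%:E)%E] = `]winv w t, 1]%classic).
Proof.
set S := [set x : R | (0 <= x <= 1) /\ (w x <= t%:E)%E].
rewrite /winv -/S; case: asboolP => [[x0 [x01 hx0]]|hne]; last first.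
  split; first by rewrite ler01 lexx.
  right; apply/seteqP; split => x /=.
    by move=> [x01 hx]; exfalso; apply: hne; exists x.
  rewrite in_itv /= => /andP[h1 h2]; have := lt_le_trans h1 h2; by rewrite ltxx.
set s := inf S.
have lbS : has_lbound S by exists 0 => y [/andP[]].
have neS : S !=set0 by exists x0.
have sle : forall y, S y -> s <= y := ge_inf lbS.
have s0 : 0 <= s.
  by apply: (@lb_le_inf R S 0 neS) => y [/andP[]].
have s1 : s <= 1.
  apply: (le_trans (sle x0 (conj x01 hx0))); by case/andP: x01.
have key : forall x, s < x -> x <= 1 -> S x.
  move=> x sx x1; have [y Sy yx] := inf_lt neS sx.
  case: Sy => /andP[y0 y1] wy; split; first by rewrite x1 (le_trans y0 (ltW yx)).
  exact: le_trans (mono _ _ y0 (ltW yx) x1) wy.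
split; first by rewrite s0 s1.
case: (pselect (S s)) => Ss; [left|right]; apply/seteqP; split => x /=;
  rewrite in_itv /=.
- by move=> Sx; rewrite sle //; case: Sx => /andP[].
- move=> /andP[sx x1]; case: (ltgtP s x) sx => // [sx _|<- _]; first exact: key.
  exact: Ss.
- move=> Sx; have sx := sle _ Sx.
  have xne : s != x by apply/eqP => esx; apply: Ss; rewrite esx.
  by rewrite lt_neqAle xne sx /=; case: Sx => /andP[].
- by move=> /andP[sx x1]; exact: key.
Qed.

Lemma unif01_itv (R : realType) (s : R) (b : bool) : 0 <= s <= 1 ->
  uniform_prob (@ltr01 R) [set` Interval (BSide b s) (BRight 1)] = (1 - s)%:E.
Proof.
move=> /andP[s0 s1]; rewrite unif_eq // subr0 invr1 mul1e.
rewrite setIidl; last first.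
  move=> x /=; rewrite !in_itv /=; case: b => /= /andP[sx ->]; rewrite andbT.
    exact: le_trans sx.
  exact: le_trans (ltW sx).
rewrite lebesgue_measure_itv /= lte_fin.
case: (ltrP s 1) => [_|s1']; first by case: b.
have -> : s = 1 by apply/eqP; rewrite eq_le s1 s1'.
by rewrite subrr; case: b.
Qed.
Lemma fsbig_finT (R : realType) (I : finType) (F : I -> \bar R):
  (\sum_(i \in [set: I]) F i = \sum_(i : I) F i)%E.
Proof.
have U : uniq (enum I) by exact: enum_uniq.
rewrite (fsbigE (enum I)) //=.
  by rewrite big_enum_cond /=; apply: eq_big => // i; rewrite in_setT.
by move=> i _; rewrite mem_enum.
Qed.

Theorem proposition1 (R : realType) (T lam : R) (hT : 0 < T) (hlam : 0 < lam)
  (w : R -> \bar R) (hw : threshold_time_fun T w) (hreg : regular w)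
  (d : measure_display) (Omega : measurableType d) (P : probability Omega R)
  (N : Omega -> nat) (alpha v : nat -> Omega -> R)
  (mN : measurable_fun setT N)
  (malpha : forall i, measurable_fun setT (alpha i))
  (mv : forall i, measurable_fun setT (v i))
  (v01 : forall i omega, 0 <= v i omega <= 1)
  (hN : forall n : nat, P [set omega | N omega = n] = (poisson_pmf (lam * T) n)%:E)
  (hiid : forall (n : nat) (A B : 'I_n -> set R),
     (forall i, measurable (A i)) -> (forall i, measurable (B i)) ->
     P [set omega | N omega = n /\
                    forall i : 'I_n, A i (alpha i omega) /\ B i (v i omega)]
     = (P [set omega | N omega = n] *
        \prod_(i < n) (uniform_prob hT (A i) * uniform_prob (@ltr01 R) (B i)))%E)
  (t : R) (ht : 0 <= t <= T) :
  P [set omega | (t%:E < sale_time (N omega)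
                     (fun i => vbt w (v i omega) (alpha i omega)))%E]
  = (expR (- (lam * t * (1 - winv w t))))%:E.
Proof.
have mono : forall u v : R, 0 <= u -> u <= v -> v <= 1 -> (w v <= w u)%E.
  by case: hreg.
have [/andP[s0 s1] Shape] := @S_shape R w t mono.
set s := winv w t in s0 s1 Shape *.
set S := [set x : R | (0 <= x <= 1) /\ (w x <= t%:E)%E] in Shape.
have mS : measurable S by case: Shape => ->; exact: measurable_itv.
have uS : uniform_prob (@ltr01 R) S = (1 - s)%:E.
  by case: Shape => ->; apply: unif01_itv; rewrite s0 s1.
have uSC : uniform_prob (@ltr01 R) (~` S) = s%:E.
  have h := probability_setC (uniform_prob (@ltr01 R)) mS.
  transitivity (1 - uniform_prob (@ltr01 R) S)%E; first exact: h.
  by rewrite uS -EFinB opprB addrC subrK.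
have uA : uniform_prob hT `]-oo, t]%classic = (t / T)%:E := @unif_le R T t hT ht.
have uAC : uniform_prob hT `]t, +oo[%classic = (1 - t / T)%:E.
  have -> : `]t, +oo[%classic = ~` `]-oo, t]%classic :> set R.
    by apply/seteqP; split => x /=; rewrite !in_itv /= andbT ltNge => /negP.
  have h := probability_setC (uniform_prob hT) (measurable_itv `]-oo, t]).
  transitivity (1 - uniform_prob hT `]-oo, t]%classic)%E; first exact: h.
  by rewrite uA -EFinB.
pose A (b : bool) : set R := if b then `]-oo, t]%classic else `]t, +oo[%classic.
pose B (b : bool) : set R := if b then ~` S else setT.
pose g (b : bool) : R := if b then t / T * s else 1 - t / T.
have hg : forall b, (uniform_prob hT (A b) * uniform_prob (@ltr01 R) (B b))%E = (g b)%:E.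
  case; rewrite /A /B /g /=.
    by rewrite uA uSC -EFinM.
  have h := probability_setT (uniform_prob (@ltr01 R)).
  have -> : uniform_prob (@ltr01 R) setT = 1%E by exact: h.
  by rewrite uAC mule1.
have mA b : measurable (A b) by case: b; rewrite /A; exact: measurable_itv.
have mB b : measurable (B b) by case: b; rewrite /B //; exact: measurableC.
pose F n (f : {ffun 'I_n -> bool}) := [set omega | N omega = n /\
   forall i : 'I_n, A (f i) (alpha i omega) /\ B (f i) (v i omega)].
have PF : forall n f, P (F n f) = (poisson_pmf (lam * T) n * \prod_(i < n) g (f i))%:E.
  move=> n f; have := hiid n (fun i => A (f i)) (fun i => B (f i)) (fun i => mA _) (fun i => mB _).
  rewrite /= => ->; rewrite hN.
  under eq_bigr do rewrite hg.
  by rewrite prodEFin -EFinM.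
have mpre : forall (f : Omega -> R) (Y : set R), measurable_fun setT f ->
    measurable Y -> measurable (f @^-1` Y).
  by move=> f Y mf mY; rewrite -[_ @^-1` _]setTI; exact: mf.
have mF : forall n f, measurable (F n f).
  move=> n f.
  have -> : F n f = N @^-1` [set n] `&` \bigcap_(i in [set: 'I_n])
      (alpha i @^-1` A (f i) `&` v i @^-1` B (f i)).
    apply/seteqP; split => omega /= [h1 h2]; split => //.
      by move=> i _; exact: h2.
    by move=> i; exact: h2.
  apply: measurableI.
    by rewrite -[_ @^-1` _]setTI; exact: mN.
  apply: fin_bigcap_measurable; first exact: finite_finset.
  by move=> i _; apply: measurableI; apply: mpre.
pose tau omega := fun i => vbt w (v i omega) (alpha i omega).
pose E n := [set omega | N omega = n /\ (t%:E < sale_time n (tau omega))%E].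
have EF : forall n, E n = \bigcup_(f in [set: {ffun 'I_n -> bool}]) F n f.
  move=> n; apply/seteqP; split => omega /=.
  - move=> [Nn]; rewrite /sale_time => /bigmin_gtP [_ H].
    exists [ffun i : 'I_n => (alpha i omega <= t)] => //; split => // i.
    rewrite ffunE; have := H i isT; rewrite /tau /vbt lt_max.
    case: (lerP (alpha i omega) t) => hal /=.
      rewrite lte_fin (ltNge t) hal orbF /A /B /= in_itv /= hal; split => //.
      by move=> [_ hw']; move: hw'; rewrite leNgt => /negP.
    by move=> _; rewrite /A /B /= in_itv /= hal andbT.
  - move=> [f _ [Nn H]]; split => //; rewrite /sale_time; apply/bigmin_gtP.
    split; first exact: ltry.
    move=> i _; have [hA hB] := H i; rewrite /tau /vbt lt_max.
    move: hA hB; case: (f i); rewrite /A /B /= ?in_itv /= => hA hB.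
      apply/orP; left; rewrite ltNge; apply/negP => hw'; apply: hB; split => //.
    by rewrite andbT in hA; rewrite lte_fin hA orbT.
have trivF : forall n, trivIset setT (F n).
  move=> n f f' _ _ [omega [[_ Hf] [_ Hf']]]; apply/ffunP => i.
  have [hA _] := Hf i; have [hA' _] := Hf' i.
  move: hA hA'; rewrite /A; case: (f i); case: (f' i) => //=; rewrite !in_itv /= andbT.
    by move=> h1 h2; have := lt_le_trans h2 h1; rewrite ltxx.
  by move=> h1 h2; have := lt_le_trans h1 h2; rewrite ltxx.
pose q := g true + g false.
have PE : forall n, P (E n) = (poisson_pmf (lam * T) n * q ^+ n)%:E.
  move=> n; rewrite EF measure_fin_bigcup; try exact: trivF;
    try exact: finite_finset; try (by move=> f _; exact: mF).
  rewrite fsbig_finT.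
  transitivity (\sum_(f : {ffun 'I_n -> bool})
      (poisson_pmf (lam * T) n * \prod_(i < n) g (f i))%:E)%E.
    by apply: eq_bigr => f _; exact: PF.
  rewrite sumEFin -mulr_sumr; congr (_ * _)%:E.
  rewrite -(bigA_distr_bigA (fun (i : 'I_n) (b : bool) => g b)) /=.
  under eq_bigr do rewrite big_bool.
  by rewrite prodr_const card_ord.
have Eeq : [set omega | (t%:E < sale_time (N omega) (tau omega))%E] = \bigcup_n E n.
  apply/seteqP; split => omega /=; first by move=> h; exists (N omega).
  by move=> [n _ [<- h]].
have mE n : measurable (E n).
  by rewrite EF; apply: fin_bigcup_measurable => // f _; exact: mF.
have trivE : trivIset setT E.
  by move=> i j _ _ [omega [[Ni _] [Nj _]]]; rewrite -Ni -Nj.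
have h1 := @measure_sigma_additive _ _ _ P E mE trivE.
change (P [set omega | (t%:E < sale_time (N omega) (tau omega))%E] =
  (expR (- (lam * t * (1 - s))))%:E).
rewrite Eeq.
set a := lam * T.
set x := a * q.
have a0 : 0 < a by rewrite /a mulr_gt0.
have c_eq : forall m, (\sum_(0 <= i < m) P (E i))%E = (expR (- a) * series (exp_coeff x) m)%:E.
  move=> m; under eq_bigr do rewrite PE.
  rewrite sumEFin /series /= mulr_sumr; congr EFin; apply: eq_bigr => i _.
  rewrite /poisson_pmf -/a a0 /x exprMn /=.
  rewrite /exp_coeff /= [(a * q) ^+ _]exprMn /a [(lam * T) ^+ _]exprMn.
  move: (lam ^+ i) (T ^+ i) (q ^+ i) (i`!%:R^-1 : R) (expR (- (lam * T))) => X Y Z U V.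
  ring.
have hx : series (exp_coeff x) @ \oo --> expR x.
  rewrite expRE.
  have -> : pseries (fun n => n`!%:R^-1) x = series (exp_coeff x).
    by apply/funext => n; rewrite /pseries exp_coeffE.
  exact: is_cvg_series_exp_coeff.
have h2 : (fun m => (expR (- a) * series (exp_coeff x) m)%:E) @ \oo -->
    (expR (- a) * expR x)%:E.
  apply: cvg_EFin; first exact: nearW.
  exact: (cvgM (cvg_cst _) hx).
have e1 : (fun n => (\sum_(0 <= i < n) P (E i))%E) =
   (fun m => (expR (- a) * series (exp_coeff x) m)%:E) := funext c_eq.
rewrite e1 in h1.
rewrite (cvg_unique (@ereal_hausdorff R) h1 h2).
rewrite -expRD; congr (expR _)%:E.
rewrite /x /a /q /g.
field.
by rewrite gt_eqF.
Qed.
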